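(* Let $I\subseteq\{1,\dots,N\}$ with cardinality $k$, $2\le k\le N$, and let $v$ be the center of the face $\Delta_I$, i.e. $v_i=1/k$ for $i\in I$ and $v_i=0$ otherwise. Then $v$ is a linearly stable equilibrium if $\alpha<(k-1)/(k-2)$, and a linearly unstable equilibrium if $\alpha>(k-1)/(k-2)$ (with the convention $(k-1)/(k-2)=+\infty$ when $k=2$).
   Context: Let $N\ge3$, $\alpha>1$, and $A_{i,j}=1-\delta_{i,j}$ for $i,j\le N$. Let $\Delta=\{v\in\mathbb R_+^N:\sum_iv_i=1,\ v_i\le3/4\ \forall i\}$ and $\Delta_I=\{v\in\Delta:v_i=0\ \forall i\notin I\}$. For $v$ with nonnegative coordinates let $v^\alpha=(v_i^\alpha)_i$, $H(v)=\sum_{i\neq j}v_i^\alpha v_j^\alpha$, $\pi_i(v)=v_i^\alpha(Av^\alpha)_i/H(v)$, and on $\Delta$ let $F(v)=-v+\pi(v)$. An equilibrium is $v\in\Delta$ with $F(v)=0$. With $DF(v)$ the differential at $v$ of $v\mapsto-v+\pi(v)$ acting on $\{x:\sum_ix_i=0\}$, an equilibrium is linearly stable if all eigenvalues of $DF(v)$ have negative real parts and linearly unstable if some eigenvalue has positive real part. *)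

(* Defs.v *)
From HB Require Import structures.
From mathcomp Require Import all_boot all_order all_algebra.
From mathcomp Require Import all_classical all_reals all_analysis.
From mathcomp Require Import complex.
Set Implicit Arguments. Unset Strict Implicit. Unset Printing Implicit Defensive.
Import Order.TTheory GRing.Theory Num.Theory.
Local Open Scope ring_scope.

Section Defs.
Variables (R : realType) (N : nat).

Definition Amat : 'M[R]_N := \matrix_(i, j) (i != j)%:R.

(* The paper only uses nonnegative coordinates;
   to be able to speak of the differential at boundary points of the
   orthant we use |v_i|^alpha, which coincides with v_i^alpha for v_i >= 0
   and is C^1 for alpha > 1. *)
Definition vpow (alpha : R) (v : 'rV[R]_N) : 'rV[R]_N :=
  \row_i (powR `|v ord0 i| alpha).

Definition Hf (alpha : R) (v : 'rV[R]_N) : R :=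
  \sum_(i < N) \sum_(j < N | i != j) vpow alpha v ord0 i * vpow alpha v ord0 j.

Definition pif (alpha : R) (v : 'rV[R]_N) : 'rV[R]_N :=
  \row_i (vpow alpha v ord0 i * (\sum_(j < N) Amat i j * vpow alpha v ord0 j)
          / Hf alpha v).

Definition Ff (alpha : R) (v : 'rV[R]_N) : 'rV[R]_N := - v + pif alpha v.

Definition Simplex : set 'rV[R]_N :=
  [set v | (forall i, 0 <= v ord0 i /\ v ord0 i <= 3 / 4) /\
           \sum_(i < N) v ord0 i = 1].

Definition equilibrium (alpha : R) (v : 'rV[R]_N) : Prop :=
  Simplex v /\ Ff alpha v = 0.

(* DF(v): the Jacobian (differential) of v |-> -v + pi(v) at v; with row
   vectors the differential is x |-> x *m DF v. *)
Definition DF (alpha : R) (v : 'rV[R]_N) : 'M[R]_N := jacobian (Ff alpha) v.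

(* lambda is an eigenvalue of the linear map M acting on the invariant
   subspace {x : sum_i x_i = 0} (complexified). *)
Definition eigenvalue_on_tangent (M : 'M[R]_N) (lambda : R[i]) : Prop :=
  exists x : 'rV[R[i]]_N, x != 0 /\ \sum_(i < N) x ord0 i = 0 /\
    x *m map_mx (fun r : R => r%:C%C) M = lambda *: x.

Definition linearly_stable (alpha : R) (v : 'rV[R]_N) : Prop :=
  equilibrium alpha v /\
  forall lambda, eigenvalue_on_tangent (DF alpha v) lambda -> Re lambda < 0.

Definition linearly_unstable (alpha : R) (v : 'rV[R]_N) : Prop :=
  equilibrium alpha v /\
  exists lambda, eigenvalue_on_tangent (DF alpha v) lambda /\ 0 < Re lambda.

Definition face_center (I : {set 'I_N}) : 'rV[R]_N :=
  \row_i (if i \in I then (#|I|%:R)^-1 else 0).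

End Defs.

(* Main.v *)
Require Import Defs.
From HB Require Import structures.
From mathcomp Require Import all_boot all_order all_algebra.
From mathcomp Require Import all_classical all_reals all_analysis.
From mathcomp Require Import complex.
From mathcomp Require Import ring lra.
Import Order.TTheory GRing.Theory Num.Theory.
Import numFieldNormedType.Exports.
Local Open Scope ring_scope.
Local Open Scope classical_set_scope.
Section W.
Variables (R : realType) (n : nat).
Notation V := 'rV[R]_n.
Implicit Types (f g : V -> R) (x v : V).

Lemma wD f g x v df dg : is_derive x v f df -> is_derive x v g dg ->
  is_derive x v (fun y => f y + g y) (df + dg).
Proof. move=> *; exact: is_deriveD. Qed.
Lemma wN f x v df : is_derive x v f df -> is_derive x v (fun y => - f y) (- df).
Proof. move=> *; exact: is_deriveN. Qed.
Lemma wM f g x v df dg : is_derive x v f df -> is_derive x v g dg ->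
  is_derive x v (fun y => f y * g y) (f x * dg + g x * df).
Proof. move=> *; exact: is_deriveM. Qed.
Lemma wV f x v df : f x != 0 -> is_derive x v f df ->
  is_derive x v (fun y => (f y)^-1) (- (f x) ^- 2 * df).
Proof. move=> fx [d1 d2]; split; [exact: derivableV|by rewrite deriveV // d2]. Qed.
Lemma wS (h : 'I_n -> V -> R) x v dh : (forall i, is_derive x v (h i) (dh i)) ->
  is_derive x v (fun y => \sum_(i < n) h i y) (\sum_(i < n) dh i).
Proof.
move=> H; have := is_derive_sum H.
by have -> : (\sum_(i < n) h i) = (fun y => \sum_(i < n) h i y) by apply/funext=> y; rewrite fct_sumE.
Qed.
Lemma wC (c : R) x v : is_derive x v (fun _ : V => c) 0.
Proof. exact: is_derive_cst. Qed.

Lemma fD f g x : differentiable f x -> differentiable g x -> differentiable (fun y => f y + g y) x.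
Proof. exact: differentiableD. Qed.
Lemma fN f x : differentiable f x -> differentiable (fun y => - f y) x.
Proof. exact: differentiableN. Qed.
Lemma fM f g x : differentiable f x -> differentiable g x -> differentiable (fun y => f y * g y) x.
Proof. exact: differentiableM. Qed.
Lemma fV f x : differentiable f x -> f x != 0 -> differentiable (fun y => (f y)^-1) x.
Proof. exact: differentiableV. Qed.
Lemma fS (h : 'I_n -> V -> R) x : (forall i, differentiable (h i) x) ->
  differentiable (fun y => \sum_(i < n) h i y) x.
Proof.
move=> H; have := differentiable_sum H.
by have -> : (\sum_(i < n) h i) = (fun y => \sum_(i < n) h i y) by apply/funext=> y; rewrite fct_sumE.
Qed.

Lemma rowfun_diff (f : V -> 'rV[R]_n) x :
  (forall i, differentiable (fun y => f y ord0 i) x) -> differentiable f x.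
Proof.
move=> H.
have -> : f = (\sum_(j < n) (fun y => f y ord0 j *: delta_mx ord0 j)).
  apply/funext => y; rewrite fct_sumE; exact: row_sum_delta.
apply: differentiable_sum => j; exact: differentiableZl.
Qed.
End W.
Section G.
Variables (R : realType) (alpha : R).
Hypothesis a1 : 1 < alpha.

Definition gp (x : R) : R := powR `|x| alpha.

Lemma gp_deriv0 : is_derive (0:R) 1 gp 0.
Proof.
have L : (h^-1 *: ((gp \o shift 0) (h *: (1:R)) - gp 0)) @[h --> (0:R)^'] --> (0:R).
  apply/cvgr0Pnorm_lt => e e0.
  have a0 : 0 < alpha - 1 by rewrite subr_gt0.
  near=> h.
  have hn0 : h != 0 by near: h; exact: nbhs_dnbhs_neq.
  rewrite /gp /= normr0 powR0 ?gt_eqF ?(lt_trans ltr01) // subr0 addr0 [h%:A]mulr1.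
  rewrite normrZ normfV (ger0_norm (powR_ge0 _ _)).
  rewrite -(mulr_powRB1 (normr_ge0 h) (lt_trans ltr01 a1)).
  rewrite mulrA mulVf ?normr_eq0 // mul1r.
  have -> : e = (e `^ (alpha - 1)^-1) `^ (alpha - 1).
    by rewrite -powRrM mulVf ?gt_eqF // powRr1 // ltW.
  rewrite gt0_ltr_powR // ?nnegrE ?normr_ge0 ?powR_ge0 //.
  near: h.
  by apply: dnbhs0_lt; exact: powR_gt0.
split; first exact: (cvgP _ L).
exact: cvg_lim L.
Unshelve. all: by end_near. Qed.

Lemma gp_derivpos (x : R) : 0 < x -> is_derive x 1 gp (alpha * x `^ (alpha - 1)).
Proof.
move=> x0; have H := is_derive1_powR alpha x0; apply: (near_eq_is_derive _ H).
near=> y; rewrite /gp ger0_norm // ltW //.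
near: y; exact: lt_nbhsr.
Unshelve. all: by end_near. Qed.

Lemma coord_derive n (j : 'I_n) (p e : 'rV[R]_n) :
  'D_e (fun v : 'rV[R]_n => v ord0 j) p = e ord0 j.
Proof.
have := @derive_mx R _ 1 n id p e (@derivable_id _ _ p e).
rewrite derive_id => H.
have -> : e ord0 j = (\matrix_(i < 1, j < n) 'D_e (fun t : 'rV[R]_n => t i j) p) ord0 j.
  by rewrite -H.
by rewrite mxE.
Qed.

Lemma u_diff n (j : 'I_n) (p : 'rV[R]_n) d :
  is_derive (p ord0 j) 1 gp d -> differentiable (fun v : 'rV[R]_n => gp (v ord0 j)) p.
Proof.
move=> [dg _].
apply: (differentiable_comp (f := fun v : 'rV[R]_n => v ord0 j) (g := gp)).
  exact: differentiable_coord.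
exact/derivable1_diffP.
Qed.

Lemma u_derive n (j : 'I_n) (p e : 'rV[R]_n) d :
  is_derive (p ord0 j) 1 gp d -> is_derive p e (fun v : 'rV[R]_n => gp (v ord0 j)) (e ord0 j * d).
Proof.
move=> hd; have D := @u_diff n j p d hd.
split; first exact: diff_derivable.
rewrite deriveE //.
have dg : differentiable gp (p ord0 j) by case: hd => h _; exact/derivable1_diffP.
rewrite (diff_comp (f := fun v : 'rV[R]_n => v ord0 j) (g := gp)) //; last exact: differentiable_coord.
have E : 'd (fun v : 'rV[R]_n => v ord0 j) p e = e ord0 j.
  rewrite -deriveE ?coord_derive //.
  exact: (@differentiable_coord R 1 n p ord0 j).
rewrite /= E deriv1E; last by case: hd.
by rewrite derive1E derive_val.
Qed.
End G.
Section C.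
Variables (R : realType) (N : nat) (alpha : R).

Definition uu (j : 'I_N) (v : 'rV[R]_N) := @gp R alpha (v ord0 j).
Definition UU (v : 'rV[R]_N) := \sum_(j < N) uu j v.
Definition QQ (v : 'rV[R]_N) := \sum_(j < N) uu j v * uu j v.

Lemma UU_split i v : UU v - uu i v = \sum_(j < N | j != i) uu j v.
Proof. by rewrite /UU (bigD1 i) //= addrC addrK. Qed.

Lemma Ff_comp v i : Ff alpha v ord0 i =
  - v ord0 i + uu i v * (UU v - uu i v) * (UU v * UU v - QQ v)^-1.
Proof.
rewrite /Ff /pif !mxE.
congr (_ + _ * _ * _).
- rewrite UU_split (bigD1 i) //= !mxE eqxx mul0r add0r.
  by apply: eq_bigr => j ji; rewrite !mxE eq_sym ji mul1r.
- congr (_^-1); rewrite /Hf /QQ mulr_suml -sumrB.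
  apply: eq_bigr => j _; rewrite -mulrBr UU_split mulr_sumr.
  apply: eq_big => [k|k kj]; first by rewrite eq_sym.
  by rewrite !mxE.
Qed.

Definition Fi i (v : 'rV[R]_N) :=
  - v ord0 i + uu i v * (UU v - uu i v) * (UU v * UU v - QQ v)^-1.

Lemma coord_is_derive (p e : 'rV[R]_N) i : is_derive p e (fun v : 'rV[R]_N => v ord0 i) (e ord0 i).
Proof.
split; last exact: coord_derive.
apply: diff_derivable; exact: (@differentiable_coord R 1 N p ord0 i).
Qed.

Lemma Fi_derive (p e : 'rV[R]_N) (dg : 'I_N -> R) i :
  (forall j, is_derive (p ord0 j) 1 (@gp R alpha) (dg j)) ->
  UU p * UU p - QQ p != 0 ->
  let DU := \sum_(j < N) e ord0 j * dg j in
  let DQ := \sum_(j < N) (uu j p * (e ord0 j * dg j) + uu j p * (e ord0 j * dg j)) in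
  let H := UU p * UU p - QQ p in
  let DH := (UU p * DU + UU p * DU) + - DQ in
  let A := uu i p * (UU p - uu i p) in
  let DA := uu i p * (DU + - (e ord0 i * dg i)) + (UU p - uu i p) * (e ord0 i * dg i) in
  is_derive p e (Fi i) (- e ord0 i + (A * (- H ^- 2 * DH) + H^-1 * DA)).
Proof.
move=> hg H0 DU DQ H DH A DA.
have hu : forall j, is_derive p e (uu j) (e ord0 j * dg j).
  move=> j; exact: u_derive.
have hU : is_derive p e UU DU by apply: wS.
have hQ : is_derive p e QQ DQ by apply: wS => j; apply: wM.
apply: wD; first by apply: wN; exact: coord_is_derive.
apply: wM.
2: apply: wV => //.
apply: wM => //; apply: wD => //; exact: wN.
Qed.

Lemma Fi_diff (p : 'rV[R]_N) i :
  (forall j, exists d, is_derive (p ord0 j) 1 (@gp R alpha) d) ->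
  UU p * UU p - QQ p != 0 -> differentiable (Fi i) p.
Proof.
move=> hg H0.
have hu : forall j, differentiable (uu j) p.
  move=> j; have [d hd] := hg j; exact: u_diff hd.
have hU : differentiable UU p by apply: fS.
have hQ : differentiable QQ p by apply: fS => j; apply: fM.
apply: fD.
  apply: fN; exact: (@differentiable_coord R 1 N p ord0 i).
apply: fM.
  apply: fM => //; apply: fD => //; exact: fN.
apply: fV => //; apply: fD; first exact: fM.
exact: fN.
Qed.

Lemma Ff_Fi i : (fun v => Ff alpha v ord0 i) = Fi i.
Proof. by apply/funext => v; rewrite Ff_comp. Qed.

Lemma Ff_diff (p : 'rV[R]_N) :
  (forall j, exists d, is_derive (p ord0 j) 1 (@gp R alpha) d) ->
  UU p * UU p - QQ p != 0 -> differentiable (Ff alpha) p.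
Proof.
move=> hg H0; apply: rowfun_diff => i; rewrite Ff_Fi; exact: Fi_diff.
Qed.

Lemma DF_entry (p : 'rV[R]_N) (dg : 'I_N -> R) m i :
  (forall j, is_derive (p ord0 j) 1 (@gp R alpha) (dg j)) ->
  UU p * UU p - QQ p != 0 ->
  DF alpha p m i = 'D_(delta_mx ord0 m) (Fi i) p.
Proof.
move=> hg H0.
have D : differentiable (Ff alpha) p.
  by apply: Ff_diff => // j; exists (dg j).
transitivity ((row m (DF alpha p)) ord0 i); first by rewrite [in RHS]mxE.
have dd : derivable (Ff alpha) p (delta_mx ord0 m) by exact: diff_derivable.
rewrite rowE /DF -(deriveEjacobian _ D) (derive_mx dd) mxE.
by rewrite Ff_Fi.
Qed.
End C.
Arguments uu {R N}. Arguments UU {R N}. Arguments QQ {R N}. Arguments Fi {R N}.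
Section F.
Variables (R : realType) (N : nat) (alpha : R) (I : {set 'I_N}).
Hypothesis a1 : 1 < alpha.
Hypothesis k2 : (2 <= #|I|)%N.

Let kR : R := #|I|%:R.
Let r : R := kR^-1.
Let t : R := r `^ (alpha - 1).
Let c : R := r `^ alpha.
Let p : 'rV[R]_N := face_center R I.
Definition dgf (j : 'I_N) : R := if j \in I then alpha * t else 0.

Lemma kR_gt0 : 0 < kR. Proof. by rewrite /kR ltr0n (leq_trans _ k2). Qed.
Lemma r_gt0 : 0 < r. Proof. by rewrite /r invr_gt0 kR_gt0. Qed.
Lemma t_gt0 : 0 < t. Proof. exact: powR_gt0 r_gt0. Qed.
Lemma c_eq : c = r * t.
Proof. by rewrite /c /t mulr_powRB1 // ?(ltW r_gt0) // (lt_trans ltr01 a1). Qed.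

Lemma p_val j : p ord0 j = if j \in I then r else 0.
Proof. by rewrite /p /face_center mxE. Qed.

Lemma hg j : is_derive (p ord0 j) 1 (@gp R alpha) (dgf j).
Proof.
rewrite p_val /dgf; case: (j \in I).
  exact: gp_derivpos r_gt0.
exact: gp_deriv0.
Qed.

Lemma uu_p j : uu alpha j p = if j \in I then c else 0.
Proof.
rewrite /uu p_val /gp; case: (j \in I).
  by rewrite ger0_norm // ltW // r_gt0.
by rewrite normr0 powR0 // gt_eqF // (lt_trans ltr01 a1).
Qed.

Lemma UU_p : UU alpha p = kR * c.
Proof.
rewrite /UU (eq_bigr _ (fun j _ => uu_p j)) -big_mkcond /= sumr_const.
by rewrite /kR mulr_natl.
Qed.

Lemma QQ_p : QQ alpha p = kR * (c * c).
Proof.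
rewrite /QQ (eq_bigr (fun j => if j \in I then c * c else 0)); last first.
  by move=> j _; rewrite uu_p; case: (j \in I); rewrite ?mulr0.
by rewrite -big_mkcond /= sumr_const /kR mulr_natl.
Qed.

Lemma kR_ge2 : 2 <= kR. Proof. by rewrite /kR ler_nat. Qed.
Lemma c_gt0 : 0 < c. Proof. exact: powR_gt0 r_gt0. Qed.

Lemma H0p : UU alpha p * UU alpha p - QQ alpha p != 0.
Proof.
rewrite UU_p QQ_p; have := kR_ge2; have := c_gt0 => h1 h2.
apply/lt0r_neq0.
have -> : kR * c * (kR * c) - kR * (c * c) = (kR * (kR - 1)) * (c * c) by ring.
apply: mulr_gt0; last exact: mulr_gt0.
apply: mulr_gt0; lra.
Qed.

Lemma sum_delta (f : 'I_N -> R) m :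
  \sum_(j < N) (delta_mx ord0 m : 'rV[R]_N) ord0 j * f j = f m.
Proof.
rewrite (bigD1 m) //= big1 ?addr0; first by rewrite mxE !eqxx mul1r.
by move=> j jm; rewrite mxE (negbTE jm) andbF mul0r.
Qed.

Lemma DF_p m i : DF alpha p m i =
  if (m \in I) && (i \in I) then
    (if m == i then -1 + alpha - 2 * alpha / kR else alpha / (kR - 1) - 2 * alpha / kR)
  else (if m == i then -1 else 0).
Proof.
rewrite (@DF_entry R N alpha p dgf m i hg H0p).
have := @Fi_derive R N alpha p (delta_mx ord0 m) dgf i hg H0p.
move=> /= hd; rewrite derive_val.
have E : \sum_(j < N) (uu alpha j p * ((delta_mx ord0 m : 'rV[R]_N) ord0 j * dgf j) +
              uu alpha j p * ((delta_mx ord0 m : 'rV[R]_N) ord0 j * dgf j)) =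
         uu alpha m p * dgf m + uu alpha m p * dgf m.
  rewrite -(sum_delta (fun j => uu alpha j p * dgf j + uu alpha j p * dgf j)).
  by apply: eq_bigr => j _; ring.
rewrite E !sum_delta UU_p QQ_p !uu_p /dgf !mxE eqxx /=.
have hk : 2 <= #|I|%:R :> R by rewrite ler_nat.
have ht := t_gt0.
rewrite c_eq /r /kR.
case: (eqVneq m i) => [->|mi].
  case: (i \in I) => /=; field; rewrite ?andbT;
    repeat (apply/andP; split); apply: lt0r_neq0; nra.
rewrite mulr0n oppr0.
case: (m \in I); case: (i \in I) => /=; field; rewrite ?andbT;
    repeat (apply/andP; split); apply: lt0r_neq0; nra.
Qed.
End F.
Local Close Scope classical_set_scope.
Section E.
Variables (R : realType) (N : nat) (alpha : R) (I : {set 'I_N}).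
Hypothesis a1 : 1 < alpha.
Hypothesis k2 : (2 <= #|I|)%N.

Let kR : R := #|I|%:R.
Let p : 'rV[R]_N := face_center R I.
Let aa : R := -1 + alpha - 2 * alpha / kR.
Let bb : R := alpha / (kR - 1) - 2 * alpha / kR.

Lemma eig_comp (x : 'rV[R[i]]_N) i :
  (x *m map_mx (fun r : R => r%:C%C) (DF alpha p)) ord0 i =
  if i \in I then ((aa - bb)%:C * x ord0 i + bb%:C * \sum_(m in I) x ord0 m)%C
  else - x ord0 i.
Proof.
rewrite mxE.
under eq_bigr do rewrite mxE (@DF_p R N alpha I a1 k2).
case: ifP => iI.
  rewrite (bigD1 i) //= iI andbT eqxx.
  rewrite [in RHS](bigD1 i) //= big_mkcondl /=.
  rewrite (eq_bigr (fun m => bb%:C * (if m \in I then x ord0 m else 0))%C); last first.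
    by move=> m mi; rewrite andbT (negbTE mi); case: (m \in I); rewrite ?mulr0 ?mul0r // mulrC.
  rewrite -mulr_sumr /aa /bb rmorphB /=; ring.
rewrite (bigD1 i) //= eqxx big1 ?addr0.
  by rewrite andbF rmorphN1 mulrN1.
by move=> m mi; rewrite andbF (negbTE mi) rmorph0 mulr0.
Qed.

Lemma equil : equilibrium alpha p.
Proof.
have hk : 2 <= kR by rewrite /kR ler_nat.
have kp : 0 < kR by lra.
split.
  split.
    move=> j; rewrite /p /face_center mxE; case: (j \in I); split => //.
    - by rewrite -(ler_pM2l kp) mulfV ?gt_eqF //; lra.
  rewrite /p /face_center (eq_bigr (fun j => if j \in I then kR^-1 else 0)); last first.
    by move=> j _; rewrite mxE.
  by rewrite -big_mkcond sumr_const -mulr_natl mulfV ?gt_eqF.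
apply/rowP => i; rewrite Ff_comp [RHS]mxE (@uu_p R N alpha I a1 k2).
rewrite (@UU_p R N alpha I a1 k2) (@QQ_p R N alpha I a1 k2) /p /face_center mxE.
rewrite (@c_eq R N alpha I a1 k2).
have ht := (@t_gt0 R N alpha I k2).
case: (i \in I); field; rewrite ?andbT; repeat (apply/andP; split); apply: lt0r_neq0; nra.
Qed.

Let mu : R := aa - bb.

Lemma comp_eq (x : 'rV[R[i]]_N) lam i :
  x *m map_mx (fun r : R => r%:C%C) (DF alpha p) = lam *: x ->
  (if i \in I then ((aa - bb)%:C * x ord0 i + bb%:C * \sum_(m in I) x ord0 m)%C
   else - x ord0 i) = lam * x ord0 i.
Proof.
move=> ex; rewrite -(eig_comp x i) ex.
by rewrite mxE.
Qed.

Lemma eig_vals lam : eigenvalue_on_tangent (DF alpha p) lam ->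
  lam = (-1)%:C%C \/ lam = mu%:C%C.
Proof.
move=> [x [xn0 [sx ex]]].
case: (eqVneq lam (-1)%:C%C) => [->|lm1]; [by left|right].
have off : forall i, i \notin I -> x ord0 i = 0.
  move=> i iI; have := comp_eq x lam i ex; rewrite (negbTE iI) => h.
  have : (lam + 1) * x ord0 i = 0 by rewrite mulrDl mul1r -h addNr.
  move/eqP; rewrite mulf_eq0 => /orP[|/eqP //].
  by rewrite addr_eq0 -(rmorphN1 (real_complex R)) (negbTE lm1).
have s0 : \sum_(m in I) x ord0 m = 0.
  rewrite -[RHS]sx [RHS](bigID (fun m => m \in I)) /= [X in _ = _ + X]big1 ?addr0 //.
have [i xi] : exists i, x ord0 i != 0.
  apply/existsP; apply: contraNT xn0 => /existsPn H.
  by apply/eqP/rowP => j; rewrite mxE; apply/eqP/negPn/H.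
have iI : i \in I.
  by case/boolP: (i \in I) => // iI; rewrite off ?eqxx in xi.
have := comp_eq x lam i ex; rewrite iI s0 mulr0 addr0 => h.
by apply: (mulIf xi); rewrite -h.
Qed.

Lemma sumdI (a : 'I_N) (A : {set 'I_N}) :
  \sum_(m in A) (delta_mx ord0 a : 'rV[R[i]]_N) ord0 m = if a \in A then 1 else 0.
Proof.
rewrite big_mkcond (bigD1 a) //= big1 => [|m ma].
  by rewrite mxE !eqxx addr0.
by rewrite mxE (negbTE ma) andbF if_same.
Qed.

Lemma sumd (a : 'I_N) :
  \sum_(m < N) (delta_mx ord0 a : 'rV[R[i]]_N) ord0 m = 1.
Proof.
rewrite (bigD1 a) //= big1 => [|m ma].
  by rewrite mxE !eqxx addr0.
by rewrite mxE (negbTE ma) andbF.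
Qed.

Lemma mu_eig : eigenvalue_on_tangent (DF alpha p) mu%:C%C.
Proof.
have /card_gt0P [i0 i0I] : (0 < #|I|)%N by apply: leq_trans k2.
have : (0 < #|I :\ i0|)%N by move: k2; rewrite (cardsD1 i0 I) i0I.
move=> /card_gt0P [i1]; rewrite in_setD1 => /andP[i10 i1I].
pose x : 'rV[R[i]]_N := delta_mx ord0 i0 - delta_mx ord0 i1.
have xv j : x ord0 j = (delta_mx ord0 i0 : 'rV[R[i]]_N) ord0 j - (delta_mx ord0 i1 : 'rV[R[i]]_N) ord0 j.
  by rewrite /x !mxE.
have s0 : \sum_(m in I) x ord0 m = 0.
  by rewrite (eq_bigr _ (fun m _ => xv m)) sumrB !sumdI i0I i1I subrr.
exists x; split.
  apply/eqP => /rowP /(_ i0); rewrite xv !mxE !eqxx eq_sym (negbTE i10) /= subr0.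
  by move/eqP; rewrite oner_eq0.
split.
  by rewrite (eq_bigr _ (fun m _ => xv m)) sumrB !sumd subrr.
apply/rowP => j; rewrite (eig_comp x j) [RHS]mxE s0 mulr0 addr0.
case: ifP => // jI.
have j0 : j != i0 by apply: contraFN jI => /eqP ->.
have j1 : j != i1 by apply: contraFN jI => /eqP ->.
by rewrite xv !mxE (negbTE j0) (negbTE j1) /= subrr mulr0 oppr0.
Qed.

Lemma mu_val : mu = -1 + alpha * (kR - 2) / (kR - 1).
Proof.
have hk : 2 <= kR by rewrite /kR ler_nat.
rewrite /mu /aa /bb; field; rewrite ?andbT; repeat (apply/andP; split); apply: lt0r_neq0; lra.
Qed.

Lemma ReCR (x : R) : 'Re (x%:C%C) = x%:C%C.
Proof. by apply/Creal_ReP; apply/complex_realP; exists x. Qed.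

Lemma ltC0 (x : R) : (x%:C%C < 0) = (x < 0).
Proof. by rewrite -[0 : R[i]](rmorph0 (real_complex R)) ltcR. Qed.
Lemma gtC0 (x : R) : (0 < x%:C%C) = (0 < x).
Proof. by rewrite -[0 : R[i]](rmorph0 (real_complex R)) ltcR. Qed.

Lemma stable_part : mu < 0 -> linearly_stable alpha p.
Proof.
move=> h; split; first exact: equil.
by move=> lam /eig_vals [->|->]; rewrite ReCR ltC0 //; lra.
Qed.

Lemma unstable_part : 0 < mu -> linearly_unstable alpha p.
Proof.
move=> h; split; first exact: equil.
by exists mu%:C%C; split; [exact: mu_eig|rewrite ReCR gtC0].
Qed.

Lemma mu_neg : (#|I| = 2%N \/ alpha < (#|I|.-1)%:R / (#|I|.-2)%:R) -> mu < 0.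
Proof.
rewrite mu_val /kR.
move: k2; case: #|I| => [|[|k']] //= _.
rewrite -(addn2 k') -(addn1 k') !natrD.
have K0 : 0 <= k'%:R :> R by [].
case=> [/eqP E|h].
  move: E; rewrite addn2 !eqSS => /eqP k0; rewrite k0 addrK mulr0 mul0r; lra.
have [K00|Kp] := eqVneq (k'%:R : R) 0.
  by move: h; rewrite K00 invr0 mulr0; lra.
have Kpos : 0 < k'%:R :> R by rewrite lt_def Kp K0.
move: h; rewrite ltr_pdivlMr // => h.
have -> : k'%:R + 2 - 2 = k'%:R :> R by ring.
have -> : k'%:R + 2 - 1 = k'%:R + 1 :> R by ring.
have : alpha * k'%:R / (k'%:R + 1) < 1.
  rewrite ltr_pdivrMr ?mul1r //; lra.
lra.
Qed.

Lemma mu_pos : (2 < #|I|)%N -> (#|I|.-1)%:R / (#|I|.-2)%:R < alpha -> 0 < mu.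
Proof.
rewrite mu_val /kR.
move: k2; case: #|I| => [|[|k']] //= _ gt.
have Kpos : 0 < k'%:R :> R by rewrite ltr0n.
rewrite -(addn2 k') -(addn1 k') !natrD.
rewrite ltr_pdivrMr // => h.
have -> : k'%:R + 2 - 2 = k'%:R :> R by ring.
have -> : k'%:R + 2 - 1 = k'%:R + 1 :> R by ring.
have : 1 < alpha * k'%:R / (k'%:R + 1).
  rewrite ltr_pdivlMr ?mul1r //; lra.
lra.
Qed.
End E.
Theorem lemma4p2 (R : realType) (N : nat) (alpha : R) (I : {set 'I_N}) :
  (3 <= N)%N -> 1 < alpha -> (2 <= #|I|)%N ->
  ((#|I| = 2%N \/ alpha < (#|I|.-1)%:R / (#|I|.-2)%:R) ->
     linearly_stable alpha (face_center R I)) /\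
  ((2 < #|I|)%N -> (#|I|.-1)%:R / (#|I|.-2)%:R < alpha ->
     linearly_unstable alpha (face_center R I)).
Proof.
move=> N3 a1 k2; split.
  move=> h; apply: (@stable_part R N alpha I a1 k2). exact: (@mu_neg R N alpha I k2 h).
move=> h1 h2; apply: (@unstable_part R N alpha I a1 k2); exact: (@mu_pos R N alpha I k2 h1 h2).
Qed.
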